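(* Let $\tau_0>0$, $\rho>1$, $n\ge 1$ an integer, and let $k_a,k_p,k_v,h_w>0$. For unknown constants $\gamma_0,\dots,\gamma_{n-1}\in(0,1)$ put $$\tilde k_a:=\Big[1-\tfrac{1}{\rho}+\tfrac{1}{\rho}\sum_{j=0}^{n-1}\tfrac{\gamma_j}{2^j}\Big]k_a ,$$ so that $\tilde k_a$ can take any value in $\big[(1-\tfrac1\rho)k_a,\,(1+\tfrac1\rho)k_a\big]$. For $\tau\in(0,\tau_0]$ define $$\tilde H(s;\tau)=\frac{\tilde k_a s^2+k_v s+k_p}{\tau s^3+s^2+\gamma s+k_p},\qquad \gamma:=k_v+h_w k_p .$$ Then: (a) If $\|\tilde H(j\omega;\tau)\|_\infty\le 1$ for all $\tau\in(0,\tau_0]$, then $\tilde k_a\in(0,1)$. (b) Let $k_a\in\big(0,\frac{1}{1+1/\rho}\big)$ and let $h_w$ satisfy $$h_w>h_{w,lb}(k_a):=2\tau_0\,\frac{1-\left(1-\frac1\rho\right)k_a}{1-\left(1+\frac1\rho\right)^2k_a^2}.$$ Then there exist $k_p,k_v>0$, not depending on the unknown $\gamma_0,\dots,\gamma_{n-1}\in(0,1)$, such that $\tilde H(s;\tau)$ is internally stable and $\|\tilde H(j\omega;\tau)\|_\infty\le 1$ for all $\tau\in(0,\tau_0]$ and every admissible value of $\tilde k_a$. (c) For every $\rho>1$, the minimizer $k_a^*$ of $h_{w,lb}(k_a)$ over $k_a\in\big(0,\frac{1}{1+1/\rho}\big)$ and the corresponding minimum value $h^*_{w,lb}=h_{w,lb}(k_a^*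 )$ are $$k_a^*=\left(\frac{1-\frac{1}{\sqrt\rho}}{1+\frac{1}{\sqrt\rho}}\right)\frac{1}{1+\frac1\rho},\qquad h^*_{w,lb}=\tau_0\,\frac{\left(1+\frac{1}{\sqrt\rho}\right)^2}{1+\frac1\rho}.$$ Correspondingly, with $k_a=k_a^*$ and any $h_w>h^*_{w,lb}$, there exist $k_p,k_v>0$, not depending on the unknown $\gamma_j$, such that $\|\tilde H(j\omega;\tau)\|_\infty\le 1$ for all $\tau\in(0,\tau_0]$.
   Context: The setting is a vehicle platoon. Vehicle $i$ obeys $\ddot x_i=a_i$ and $\tau\dot a_i+a_i=u_i$, where $\tau\in(0,\tau_0]$ is an uncertain parasitic actuation lag. Each vehicle uses the control law $$u_i=k_a w_{i,i-1}(t)a_{i-1}-k_v(v_i-v_{i-1})-k_p\delta_i ,$$ where $\delta_i=x_i-x_{i-1}+d+h_w v_i$ and $h_w$ is the time headway. The communicated acceleration of the predecessor is corrupted by noise: $$w_{i,i-1}(t)=\Big(1-\tfrac1\rho\Big)+\tfrac1\rho\sum_{j=0}^{n-1}\frac{z_{i,j}(t)}{2^j},$$ where the $z_{i,j}$ are independent binary random processes with time-invariant, unknown means $\gamma_j\in(0,1)$ and $\rho>1$ is the signal-to-noise ratio factor. Taking expectations gives the averaged spacing-error propagation $\bar\delta_i(s)=\tilde H(s;\tau)\bar\delta_{i-1}(s)$, with $\tilde k_a=k_a\,\mathbb E[w_{i,i-1}]$. Here $\|\tilde H(j\omega;\tau)\|_\infty=\sup_{\omega\in\mathbb R}|\tilde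 H(j\omega;\tau)|$. Robust string stability means that $\tilde H$ is internally stable (its denominator is Hurwitz) and $\|\tilde H(j\omega;\tau)\|_\infty\le1$ for all $\tau\in(0,\tau_0]$. *)

(* Defs.v *)
From HB Require Import structures.
From mathcomp Require Import all_boot all_order all_algebra.
From mathcomp Require Import complex.
Set Implicit Arguments. Unset Strict Implicit. Unset Printing Implicit Defensive.
Import Order.TTheory GRing.Theory Num.Theory.
Local Open Scope ring_scope.
Local Open Scope complex_scope.

Section PlatoonDefs.
Variable R : rcfType.

Definition kta (rho ka : R) (n : nat) (gam : 'I_n -> R) : R :=
  (1 - rho^-1 + rho^-1 * \sum_(j < n) gam j / 2 ^+ j) * ka.

Definition Hnum (kt kv kp : R) (s : R[i]) : R[i] :=
  kt%:C * s ^+ 2 + kv%:C * s + kp%:C.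
Definition Hden (tau g kp : R) (s : R[i]) : R[i] :=
  tau%:C * s ^+ 3 + s ^+ 2 + g%:C * s + kp%:C.

(* ||H~(j w; tau)||_oo <= 1, i.e. |H~(j w)| <= 1 for every real w,
   written as |num(j w)| <= |den(j w)| (no division by zero issues). *)
Definition Hinf_le1 (kt kv kp g tau : R) : Prop :=
  forall w : R, `| Hnum kt kv kp (Complex 0 w) | <= `| Hden tau g kp (Complex 0 w) |.

Definition internally_stable (tau g kp : R) : Prop :=
  forall z : R[i], Hden tau g kp z = 0 -> Re z < 0.

Definition hwlb (tau0 rho ka : R) : R :=
  2 * tau0 * (1 - (1 - rho^-1) * ka) / (1 - (1 + rho^-1) ^+ 2 * ka ^+ 2).

Definition ka_star (rho : R) : R :=
  ((1 - (Num.sqrt rho)^-1) / (1 + (Num.sqrt rho)^-1)) * (1 + rho^-1)^-1.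

Definition hwlb_star (tau0 rho : R) : R :=
  tau0 * (1 + (Num.sqrt rho)^-1) ^+ 2 / (1 + rho^-1).

End PlatoonDefs.

(* Main.v *)
Require Import Defs.
From HB Require Import structures.
From mathcomp Require Import all_boot all_order all_algebra.
From mathcomp Require Import complex ring lra.
Import Order.TTheory GRing.Theory Num.Theory.
Local Open Scope ring_scope.

Local Open Scope complex_scope.
Section S.
Variable R : rcfType.
Lemma norm_le (a b c d : R) : (`|Complex a b| <= `|Complex c d|) = (a^+2+b^+2 <= c^+2+d^+2).
Proof. rewrite !normc_def /= lecR ler_sqrt //. by apply: addr_ge0; apply: sqr_ge0. Qed.
Lemma Hnum_jw (kt kv kp w : R) : Hnum kt kv kp (Complex 0 w) = Complex (kp - kt*w^+2) (kv*w).
Proof. rewrite /Hnum. apply/eqP; rewrite eq_complex /= !expr2 /=. simpc. rewrite ?andbT; first [apply/andP; split; apply/eqP; ring | apply/eqP; ring]. Qed.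
Lemma Hden_z (tau g kp x y : R) : Hden tau g kp (Complex x y) =
  Complex (tau*(x^+3 - 3*x*y^+2) + (x^+2 - y^+2) + g*x + kp) (tau*(3*x^+2*y - y^+3) + 2*x*y + g*y).
Proof. rewrite /Hden. apply/eqP; rewrite eq_complex /= !exprS !expr0 /=. simpc. rewrite ?andbT; first [apply/andP; split; apply/eqP; ring | apply/eqP; ring]. Qed.
Lemma Hden_jw (tau g kp w : R) : Hden tau g kp (Complex 0 w) = Complex (kp - w^+2) (w * (g - tau * w^+2)).
Proof. rewrite Hden_z; congr Complex; ring. Qed.
Lemma hinf_suff (kt kv kp g tau : R) : 0 <= 1 - kt^+2 - 2*g*tau ->
  0 <= g^+2 - kv^+2 - 2*kp*(1-kt) -> Hinf_le1 kt kv kp g tau.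
Proof.
move=> h1 h2 w; rewrite Hnum_jw Hden_jw norm_le -subr_ge0.
have -> : (kp - w ^+ 2) ^+ 2 + (w * (g - tau * w ^+ 2)) ^+ 2 - ((kp - kt * w ^+ 2) ^+ 2 + (kv * w) ^+ 2)
  = w^+2 * (tau^+2 * (w^+2)^+2 + (1 - kt^+2 - 2*g*tau) * w^+2 + (g^+2 - kv^+2 - 2*kp*(1-kt))) by ring.
apply: mulr_ge0; first exact: sqr_ge0.
apply: addr_ge0 => //; apply: addr_ge0; apply: mulr_ge0 => //; exact: sqr_ge0.
Qed.
Lemma stable_suff (tau g kp : R) : 0 < tau -> 0 < g -> 0 < kp -> tau * kp < g ->
  internally_stable tau g kp.
Proof.
move=> ht hg hk htk [x y]; rewrite Hden_z => /eqP; rewrite eq_complex /= => /andP[/eqP Hre /eqP Him].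
rewrite -complexRe ltcE /= eqxx /= ltNge; apply/negP => hx.
have [y0|yn0] := eqVneq y 0.
  move: Hre; rewrite y0 expr0n /= mulr0 !subr0 => Hre.
  have : 0 < tau * x ^+ 3 + x ^+ 2 + g * x + kp.
    rewrite ltr_wpDl // addr_ge0 ?mulr_ge0 //; last exact: ltW.
    by rewrite addr_ge0 ?mulr_ge0 ?exprn_ge0 // ltW.
  by rewrite Hre ltxx.
have E1 : tau * (3 * x ^+ 2 - y ^+ 2) + 2 * x + g = 0.
  have : y * (tau * (3 * x ^+ 2 - y ^+ 2) + 2 * x + g) = 0 by rewrite -Him; ring.
  by move/eqP; rewrite mulf_eq0 (negPf yn0) /= => /eqP.
have E : tau * (tau * (x ^+ 3 - 3 * x * y ^+ 2) + (x ^+ 2 - y ^+ 2) + g * x + kp)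
   - (3 * tau * x + 1) * (tau * (3 * x ^+ 2 - y ^+ 2) + 2 * x + g)
   = - (8 * tau^+2 * x^+3 + 8 * tau * x^+2 + 2 * x + 2 * tau * g * x + (g - tau * kp)) by ring.
rewrite Hre E1 mulr0 mulr0 subr0 in E.
have : 0 < 8 * tau^+2 * x^+3 + 8 * tau * x^+2 + 2 * x + 2 * tau * g * x + (g - tau * kp).
  rewrite ltr_wpDl ?subr_gt0 //. by rewrite !addr_ge0 ?mulr_ge0 ?exprn_ge0 // ltW.
move/eqP: E; rewrite eq_sym oppr_eq0 => /eqP ->. by rewrite ltxx.
Qed.
Lemma geom (n : nat) : \sum_(j < n) ((2:R) ^+ j)^-1 = 2 - 2 * ((2:R) ^+ n)^-1.
Proof.
elim: n => [|n IH]; first by rewrite big_ord0 expr0 invr1 mulr1 subrr.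
rewrite big_ord_recr /= IH exprS.
have h : (2:R) ^+ n != 0 by rewrite expf_neq0 // pnatr_eq0.
field. by [].
Qed.
Lemma sum_bounds (n : nat) (gam : 'I_n -> R) : (forall j, 0 < gam j < 1) ->
  0 <= \sum_(j < n) gam j / 2 ^+ j <= 2.
Proof.
move=> hg; apply/andP; split.
  apply: sumr_ge0 => j _; apply: divr_ge0; last exact: exprn_ge0.
  by case/andP: (hg j) => /ltW.
apply: (@le_trans _ _ (\sum_(j < n) ((2:R) ^+ j)^-1)).
  apply: ler_sum => j _. rewrite ler_pdivrMr ?exprn_gt0 // mulVf ?expf_neq0 ?pnatr_eq0 //.
  by case/andP: (hg j) => _ /ltW.
apply: (@le_trans _ _ (2 - 2 * ((2:R)^+n)^-1)).
  by rewrite -geom; exact: lexx.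
rewrite lerBlDr lerDl. apply: mulr_ge0 => //. by rewrite invr_ge0 exprn_ge0.
Qed.
Lemma kta_bounds (rho ka : R) (n : nat) (gam : 'I_n -> R) : 1 < rho -> 0 < ka ->
  (forall j, 0 < gam j < 1) ->
  (1 - rho^-1) * ka <= kta rho ka gam <= (1 + rho^-1) * ka.
Proof.
move=> hr hk hg; have /andP[s0 s2] := @sum_bounds n gam hg.
have hr0 : 0 < rho^-1 by rewrite invr_gt0; lra.
rewrite /kta; set S := \sum_(j < n) _.
apply/andP; split; rewrite -subr_ge0.
  have -> : (1 - rho^-1 + rho^-1 * S) * ka - (1 - rho^-1) * ka = rho^-1 * S * ka by ring.
  by rewrite !mulr_ge0 // ltW.
have -> : (1 + rho^-1) * ka - (1 - rho^-1 + rho^-1 * S) * ka = rho^-1 * (2 - S) * ka by ring.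
by rewrite !mulr_ge0 ?subr_ge0 // ltW.
Qed.
Lemma part_a (tau0 kt kv kp g : R) : 0 < tau0 -> 0 < kv -> 0 < kp -> 0 < g ->
  (forall tau, 0 < tau <= tau0 -> Hinf_le1 kt kv kp g tau) -> kt < 1.
Proof.
move=> ht0 hv hp hg H; rewrite ltNge; apply/negP => hkt.
set W := kp + g / tau0 + 1.
have hgt : 0 <= g / tau0 by rewrite divr_ge0 // ltW.
have hW : 0 < W by rewrite /W; lra.
have hWkp : kp < W by rewrite /W; lra.
have hgW : g < tau0 * W.
  have : g / tau0 < W by rewrite /W; lra.
  by rewrite ltr_pdivrMr // mulrC.
have htau : 0 < g / W <= tau0.
  apply/andP; split; first exact: divr_gt0.
  by rewrite ler_pdivrMr // ltW.
have := H (g / W) htau (Num.sqrt W).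
rewrite Hnum_jw Hden_jw norm_le sqr_sqrtr ?(ltW hW) //.
have -> : g - g / W * W = 0 by field; rewrite gt_eqF.
rewrite mulr0 expr0n /= addr0 exprMn sqr_sqrtr ?(ltW hW) //.
have h1 : (kp - W)^+2 <= (kp - kt * W)^+2.
  have -> : (kp - kt * W)^+2 = (kp - W)^+2 + (kt * W - W) * (kt * W + W - 2 * kp) by ring.
  rewrite lerDl; apply: mulr_ge0; nra.
have h2 : 0 < kv^+2 * W by rewrite mulr_gt0 ?exprn_gt0.
lra.
Qed.
Lemma part_b (tau0 rho : R) (n : nat) (ka hw : R) : 0 < tau0 -> 1 < rho ->
  0 < ka < (1 + rho^-1)^-1 -> hwlb tau0 rho ka < hw ->
  exists kp kv : R, 0 < kp /\ 0 < kv /\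
    forall gam : 'I_n -> R, (forall j, 0 < gam j < 1) ->
    forall tau, 0 < tau <= tau0 ->
      internally_stable tau (kv + hw * kp) kp /\
      Hinf_le1 (kta rho ka gam) kv kp (kv + hw * kp) tau.
Proof.
move=> ht0 hr /andP[hka hku] hlb.
have hr0 : 0 < rho^-1 by rewrite invr_gt0; lra.
have hr1 : rho^-1 < 1 by rewrite invf_lt1 //; lra.
set r := rho^-1 in hr0 hr1 hku hlb *.
have hu : (1 + r) * ka < 1.
  have h1r : (1 + r) != 0 by rewrite gt_eqF //; lra.
  have h1p : 0 < 1 + r by lra.
  by move: hku; rewrite -(ltr_pM2l h1p) mulfV.
set u := (1 + r) * ka in hu.
have hu0 : 0 < u by rewrite /u mulr_gt0 //; lra.
have hlu : (1 - r) * ka < u by rewrite /u ltr_pM2r //; lra.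
set D := 1 - u^+2.
set N := 1 - (1 - r) * ka.
have hD : 0 < D by rewrite /D; nra.
have hN : 0 < N by rewrite /N; lra.
have hND : D <= 2 * N by rewrite /D /N; nra.
have hlb' : 2 * tau0 * N < hw * D.
  move: hlb; rewrite /hwlb -/r -exprMn -/u -/D -/N ltr_pdivrMr //.
have hwlb0 : tau0 < hw.
  have : tau0 * D < hw * D by nra.
  by rewrite ltr_pM2r.
have hw0 : 0 < hw by lra.
set A := D / (2 * tau0).
have hA : A * (2 * tau0) = D by rewrite /A divfK // gt_eqF // mulr_gt0.
set P := 2 * hw * A - 2 * N.
have hP : 0 < P.
  rewrite /P subr_gt0. 
  have : 2 * N * tau0 < 2 * hw * A * tau0 by nra.
  by rewrite ltr_pM2r.
set kv := N / hw.
set kp := P / (2 * hw^+2).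
have hkv : kv * hw = N by rewrite /kv divfK // gt_eqF.
have hkp : kp * (2 * hw^+2) = P by rewrite /kp divfK // gt_eqF // mulr_gt0 // exprn_gt0.
have hkv0 : 0 < kv by rewrite /kv divr_gt0.
have hkp0 : 0 < kp by rewrite /kp divr_gt0 // mulr_gt0 // exprn_gt0.
have hg : kv + hw * kp = A.
  have : (kv + hw * kp) * (2 * hw) = A * (2 * hw).
    have -> : (kv + hw * kp) * (2 * hw) = 2 * (kv * hw) + kp * (2 * hw^+2) by ring.
    by rewrite hkv hkp /P; ring.
  move/(congr1 (fun t => t / (2 * hw))); rewrite !mulfK // gt_eqF // mulr_gt0 //.
exists kp, kv; split => //; split => // gam hgam tau /andP[ht htt].
have /andP[kt1 kt2] := @kta_bounds rho ka n gam hr hka hgam.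
rewrite -/r -/u in kt1 kt2.
set kt := kta rho ka gam in kt1 kt2 *.
rewrite hg; split.
  apply: stable_suff => //.
    by rewrite -hg addr_gt0 // mulr_gt0.
  have hkp1 : hw * kp < A.
    have : hw * kp * (2 * hw) < A * (2 * hw).
      have -> : hw * kp * (2 * hw) = kp * (2 * hw^+2) by ring.
      rewrite hkp /P; nra.
    by rewrite ltr_pM2r // mulr_gt0.
  nra.
apply: hinf_suff.
  have : 2 * A * tau <= D.
    rewrite -hA; nra.
  have hk0 : 0 <= kt.
    apply: le_trans kt1; apply: mulr_ge0; lra.
  have hk2 : kt^+2 <= u^+2.
    rewrite -subr_ge0; have -> : u^+2 - kt^+2 = (u - kt) * (u + kt) by ring.
    apply: mulr_ge0; lra.
  rewrite /D; lra.
have -> : A^+2 - kv^+2 - 2 * kp * (1 - kt) = (kv + hw * kp)^+2 - kv^+2 - 2 * kp * (1 - kt) by rewrite hg.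
have -> : (kv + hw * kp)^+2 - kv^+2 - 2 * kp * (1 - kt) = kp * (2 * (kv * hw) + kp * (2 * hw^+2) / 2 - 2 * (1 - kt)) by field.
rewrite hkv hkp; apply: mulr_ge0; first exact: ltW.
rewrite /N in hN *; nra.
Qed.
Lemma part_c (tau0 rho : R) : 0 < tau0 -> 1 < rho ->
  (0 < ka_star rho < (1 + rho^-1)^-1 /\
   (forall ka, 0 < ka < (1 + rho^-1)^-1 ->
      hwlb tau0 rho (ka_star rho) <= hwlb tau0 rho ka) /\
   (forall ka, 0 < ka < (1 + rho^-1)^-1 ->
      hwlb tau0 rho ka = hwlb tau0 rho (ka_star rho) -> ka = ka_star rho) /\
   hwlb tau0 rho (ka_star rho) = hwlb_star tau0 rho).
Proof.
move=> ht0 hr.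
have hs : 1 < Num.sqrt rho by rewrite -sqrtr1 ltr_sqrt //; lra.
have hq0 : 0 < (Num.sqrt rho)^-1 by rewrite invr_gt0; lra.
have hq1 : (Num.sqrt rho)^-1 < 1 by rewrite invf_lt1 //; lra.
have hrq : rho^-1 = ((Num.sqrt rho)^-1)^+2 by rewrite exprVn sqr_sqrtr //; lra.
set q := (Num.sqrt rho)^-1 in hq0 hq1 hrq.
set kas := (1 - q) / (1 + q) * (1 + q^+2)^-1.
set hs' := tau0 * (1 + q)^+2 / (1 + q^+2).
have Eks : ka_star rho = kas by rewrite /ka_star -/q hrq.
have Ehs : hwlb_star tau0 rho = hs' by rewrite /hwlb_star -/q hrq.
have Ehw : forall ka, hwlb tau0 rho ka = 2 * tau0 * (1 - (1 - q^+2) * ka) / (1 - (1 + q^+2)^+2 * ka^+2).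
  by move=> ka; rewrite /hwlb hrq.
rewrite Eks Ehs hrq.
have h1q : 0 < 1 + q^+2 by rewrite ltr_pwDl // sqr_ge0.
have ident : forall ka, 0 < ka < (1 + q^+2)^-1 ->
   0 < 1 - (1 + q^+2)^+2 * ka^+2 /\
   2 * tau0 * (1 - (1 - q^+2) * ka) / (1 - (1 + q^+2)^+2 * ka^+2) - hs'
   = tau0 * (1 + q)^+2 * (1 + q^+2) * (ka - kas)^+2 / (1 - (1 + q^+2)^+2 * ka^+2).
  move=> ka /andP[k0 k1].
  have hu : (1 + q^+2) * ka < 1.
    by have h := k1; rewrite -(ltr_pM2l h1q) mulfV ?gt_eqF in h.
  have hu0 : 0 < (1 + q^+2) * ka by rewrite mulr_gt0.
  have hD : 0 < 1 - (1 + q^+2)^+2 * ka^+2.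
    rewrite -exprMn subr_gt0; nra.
  split => //.
  rewrite /hs' /kas; field.
  by rewrite -exprMn in hD; rewrite !gt_eqF //; lra.
have hks0 : 0 < kas.
  rewrite /kas; apply: mulr_gt0; last by rewrite invr_gt0.
  apply: divr_gt0; lra.
have hks1 : kas < (1 + q^+2)^-1.
  rewrite /kas -[X in _ < X]mul1r ltr_pM2r ?invr_gt0 // ltr_pdivrMr; lra.
have hksr : 0 < kas < (1 + q^+2)^-1 by rewrite hks0 hks1.
have [_ idk] := ident kas hksr.
rewrite subrr expr0n /= !mulr0 mul0r in idk.
have Hk : hwlb tau0 rho kas = hs'.
  by rewrite Ehw; apply/eqP; rewrite -subr_eq0 idk.
split => //; split; last split => //.
  move=> ka hk; have [hD id] := ident ka hk.
  rewrite Hk -subr_ge0 Ehw id; apply: divr_ge0; last exact: ltW.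
  apply: mulr_ge0; last exact: sqr_ge0.
  apply: mulr_ge0; last exact: ltW.
  apply: mulr_ge0; [exact: ltW | exact: sqr_ge0].
move=> ka hk; have [hD id] := ident ka hk.
rewrite Hk Ehw => /eqP; rewrite -subr_eq0 id => /eqP.
move/(congr1 (fun t => t * (1 - (1 + q^+2)^+2 * ka^+2))); rewrite mul0r divfK ?gt_eqF //.
have hc : tau0 * (1 + q)^+2 * (1 + q^+2) != 0.
  rewrite !mulf_neq0 ?gt_eqF //; lra.
move/eqP; rewrite mulf_eq0 (negPf hc) /= sqrf_eq0 subr_eq0 => /eqP //.
Qed.
End S.
Local Close Scope complex_scope.


Theorem theorem2 (R : rcfType) (tau0 rho : R) (n : nat) :
  0 < tau0 -> 1 < rho -> (1 <= n)%N ->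
  (* (a) *)
  (forall (ka kp kv hw : R) (gam : 'I_n -> R),
     0 < ka -> 0 < kp -> 0 < kv -> 0 < hw ->
     (forall j, 0 < gam j < 1) ->
     (forall tau, 0 < tau <= tau0 ->
        Hinf_le1 (kta rho ka gam) kv kp (kv + hw * kp) tau) ->
     0 < kta rho ka gam < 1)
  /\
  (* (b) *)
  (forall ka hw : R,
     0 < ka < (1 + rho^-1)^-1 ->
     hwlb tau0 rho ka < hw ->
     exists kp kv : R, 0 < kp /\ 0 < kv /\
       forall gam : 'I_n -> R, (forall j, 0 < gam j < 1) ->
       forall tau, 0 < tau <= tau0 ->
         internally_stable tau (kv + hw * kp) kp /\
         Hinf_le1 (kta rho ka gam) kv kp (kv + hw * kp) tau)
  /\
  (* (c) *)
  (0 < ka_star rho < (1 + rho^-1)^-1 /\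
   (forall ka, 0 < ka < (1 + rho^-1)^-1 ->
      hwlb tau0 rho (ka_star rho) <= hwlb tau0 rho ka) /\
   (forall ka, 0 < ka < (1 + rho^-1)^-1 ->
      hwlb tau0 rho ka = hwlb tau0 rho (ka_star rho) -> ka = ka_star rho) /\
   hwlb tau0 rho (ka_star rho) = hwlb_star tau0 rho /\
   (forall hw : R, hwlb_star tau0 rho < hw ->
      exists kp kv : R, 0 < kp /\ 0 < kv /\
        forall gam : 'I_n -> R, (forall j, 0 < gam j < 1) ->
        forall tau, 0 < tau <= tau0 ->
          Hinf_le1 (kta rho (ka_star rho) gam) kv kp (kv + hw * kp) tau)).
Proof.
move=> ht0 hr hn; split.
  move=> ka kp kv hw gam hka hkp hkv hhw hg H.
  have /andP[k1 _] := @kta_bounds R rho ka n gam hr hka hg.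
  have hr0 : 0 < rho^-1 by rewrite invr_gt0; lra.
  have hr1 : rho^-1 < 1 by rewrite invf_lt1 //; lra.
  apply/andP; split.
    apply: lt_le_trans k1; apply: mulr_gt0 => //; lra.
  apply: (@part_a R tau0 _ kv kp (kv + hw * kp) ht0 hkv hkp _ H).
  by rewrite addr_gt0 // mulr_gt0.
split.
  move=> ka hw hk hl; exact: part_b.
have [c1 [c2 [c3 c4]]] := @part_c R tau0 rho ht0 hr.
do 4 (split => //).
move=> hw hl.
have hl' : hwlb tau0 rho (ka_star rho) < hw by rewrite c4.
have [kp [kv [p1 [p2 H]]]] := @part_b R tau0 rho n (ka_star rho) hw ht0 hr c1 hl'.
exists kp, kv; do 2 (split => //).
move=> gam hg tau ht; exact: (H gam hg tau ht).2.
Qed.
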